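(* Let $(X,d)$ be a complete metric space, $N\in\mathbb{N}\setminus\{0\}$, $\alpha:(X\times X)\times(X\times X)\rightarrow[0,+\infty)$ an $N$--transitive mapping on $X\times X$, and $F:X\times X\rightarrow X$ such that for every $\varepsilon>0$ there exists $\delta(\varepsilon)>0$ for which, for all $(x,y),(u,v)\in X\times X$, \[ \varepsilon\leq\tfrac{d(x,u)+d(y,v)}{2}<\varepsilon+\delta(\varepsilon)\Rightarrow\alpha((x,y),(u,v))\,d(F(x,y),F(u,v))<\varepsilon. \] Suppose that: (B1) for all $(x,y),(u,v)\in X\times X$, $\alpha((x,y),(u,v))\geq1$ implies $\alpha((F(x,y),F(y,x)),(F(u,v),F(v,u)))\geq1$; (B2) there exists $(x_{0},y_{0})\in X\times X$ such that $\alpha((x_{0},y_{0}),(F(x_{0},y_{0}),F(y_{0},x_{0})))\geq1$ and $\alpha((F(y_{0},x_{0}),F(x_{0},y_{0})),(y_{0},x_{0}))\geq1$; (B4) for every sequence $\{(x_{n},y_{n})\}$ in $X\times X$ with $x_{n}\rightarrow x\in X$, $y_{n}\rightarrow y\in X$ and $\alpha((x_{n},y_{n}),(x_{n+1},y_{n+1}))\geq1$, $\alpha((y_{n+1},x_{n+1}),(y_{n},x_{n}))\geq1$ for all $n\in\mathbb{N}$, there exists a subsequence $\{(x_{n(k)},y_{n(k)})\}$ with $\alpha((x_{n(k)},y_{n(k)}),(x,y))\geq1$ and $\alpha((y,x),(y_{n(k)},x_{n(k)}))\geq1$ for all $k\in\mathbb{N}$. Then $F$ has a coupled fixed point, i.e.,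 there exists $(x^{\ast},y^{\ast})\in X\times X$ with $x^{\ast}=F(x^{\ast},y^{\ast})$ and $y^{\ast}=F(y^{\ast},x^{\ast})$.
   Context: $\mathbb{N}$ is the set of non-negative integers. For a set $Z$ and $\gamma:Z\times Z\rightarrow[0,+\infty)$, $\gamma$ is $N$--transitive (on $Z$) if for all $z_0,\dots,z_{N+1}\in Z$ with $\gamma(z_i,z_{i+1})\geq1$ for all $i\in\{0,\dots,N\}$ one has $\gamma(z_0,z_{N+1})\geq1$; here $Z=X\times X$. *)

(* Defs.v *)
From Stdlib Require Import Reals Lra.
Open Scope R_scope.

Definition is_metric {X : Type} (d : X -> X -> R) : Prop :=
  (forall x y, 0 <= d x y) /\
  (forall x y, d x y = 0 <-> x = y) /\
  (forall x y, d x y = d y x) /\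
  (forall x y z, d x z <= d x y + d y z).

Definition cauchy_seq {X : Type} (d : X -> X -> R) (s : nat -> X) : Prop :=
  forall eps, 0 < eps -> exists N, forall m n, (N <= m)%nat -> (N <= n)%nat ->
    d (s m) (s n) < eps.

Definition converges_to {X : Type} (d : X -> X -> R) (s : nat -> X) (l : X) : Prop :=
  forall eps, 0 < eps -> exists N, forall n, (N <= n)%nat -> d (s n) l < eps.

Definition complete_metric {X : Type} (d : X -> X -> R) : Prop :=
  forall s : nat -> X, cauchy_seq d s -> exists l, converges_to d s l.

Definition N_transitive {Z : Type} (N : nat) (gamma : Z -> Z -> R) : Prop :=
  forall z : nat -> Z,
    (forall i, (i <= N)%nat -> 1 <= gamma (z i) (z (S i))) ->
    1 <= gamma (z 0%nat) (z (S N)).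

Definition strictly_increasing (phi : nat -> nat) : Prop :=
  forall k, (phi k < phi (S k))%nat.

(* Main.v *)
Require Import Defs.
From Stdlib Require Import Reals.
From Stdlib Require Import Lra Lia Arith.
Open Scope R_scope.

Lemma chain_lemma (N : nat) (P : nat -> nat -> Prop) :
  (forall n, P n (S n)) ->
  (forall i : nat -> nat, (forall t, (t <= N)%nat -> P (i t) (i (S t))) ->
      P (i 0%nat) (i (S N))) ->
  forall k n, P n (n + 1 + k * N)%nat.
Proof.
  intros H1 HT k. induction k as [|k IH]; intros n.
  - replace (n+1+0*N)%nat with (S n) by lia. apply H1.
  - set (i := fun t => if Nat.leb t N then (n + t)%nat else (n + 1 + S k * N)%nat).
    assert (E0 : i 0%nat = n) by (unfold i; simpl; lia).
    assert (E1 : i (S N) = (n+1+S k*N)%nat).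
    { unfold i. destruct (Nat.leb_spec (S N) N); [lia|reflexivity]. }
    assert (H : P (i 0%nat) (i (S N))).
    { apply HT. intros t Ht. unfold i.
      destruct (Nat.leb_spec t N); [|lia].
      destruct (Nat.leb_spec (S t) N).
      - replace (n + S t)%nat with (S (n+t)) by lia. apply H1.
      - replace (n+1+S k*N)%nat with ((n+N)+1+k*N)%nat by lia.
        replace t with N by lia. apply IH. }
    rewrite E0, E1 in H. exact H.
Qed.

Fixpoint iterT {X : Type} (F : X -> X -> X) (p : X * X) (n : nat) : X * X :=
  match n with
  | O => p
  | S n => let q := iterT F p n in (F (fst q) (snd q), F (snd q) (fst q))
  end.

Theorem corollary2 (X : Type) (d : X -> X -> R)
  (Hmet : is_metric d) (Hcomp : complete_metric d)
  (N : nat) (HN : (N <> 0)%nat)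
  (alpha : (X * X) -> (X * X) -> R)
  (Halpha0 : forall p q, 0 <= alpha p q)
  (Htrans : N_transitive N alpha)
  (F : X -> X -> X)
  (Hcontr : forall eps, 0 < eps -> exists delta, 0 < delta /\
     forall x y u v,
       eps <= (d x u + d y v) / 2 < eps + delta ->
       alpha (x, y) (u, v) * d (F x y) (F u v) < eps)
  (HB1 : forall x y u v, 1 <= alpha (x, y) (u, v) ->
       1 <= alpha (F x y, F y x) (F u v, F v u))
  (HB2 : exists x0 y0,
       1 <= alpha (x0, y0) (F x0 y0, F y0 x0) /\
       1 <= alpha (F y0 x0, F x0 y0) (y0, x0))
  (HB4 : forall (xs ys : nat -> X) (x y : X),
       converges_to d xs x -> converges_to d ys y ->
       (forall n, 1 <= alpha (xs n, ys n) (xs (S n), ys (S n)) /\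
                  1 <= alpha (ys (S n), xs (S n)) (ys n, xs n)) ->
       exists phi : nat -> nat, strictly_increasing phi /\
         forall k, 1 <= alpha (xs (phi k), ys (phi k)) (x, y) /\
                   1 <= alpha (y, x) (ys (phi k), xs (phi k))) :
  exists xs ys : X, xs = F xs ys /\ ys = F ys xs.
Proof.
  destruct Hmet as [Hd0 [Hdeq [Hdsym Hdtri]]].
  assert (Hdxx : forall x, d x x = 0) by (intro x; apply Hdeq; reflexivity).
  assert (Hweak : forall x y u v, 1 <= alpha (x,y) (u,v) ->
            d (F x y) (F u v) <= (d x u + d y v)/2).
  { intros x y u v Ha.
    destruct (Rle_lt_or_eq_dec 0 ((d x u + d y v)/2)) as [Hp|He].
    { pose proof (Hd0 x u); pose proof (Hd0 y v); lra. }
    - destruct (Hcontr _ Hp) as [de [Hde Hc]].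
      assert (Hc' := Hc x y u v ltac:(lra)).
      pose proof (Hd0 (F x y) (F u v)). nra.
    - assert (d x u = 0) by (pose proof (Hd0 x u); pose proof (Hd0 y v); lra).
      assert (d y v = 0) by (pose proof (Hd0 x u); pose proof (Hd0 y v); lra).
      apply Hdeq in H. apply Hdeq in H0. subst. rewrite Hdxx. lra. }
  assert (Hmk : forall e, 0 < e -> exists de, 0 < de /\ forall x y u v,
            1 <= alpha (x,y) (u,v) -> (d x u + d y v)/2 < e + de ->
            d (F x y) (F u v) < e).
  { intros e He. destruct (Hcontr _ He) as [de [Hde Hc]]. exists de. split; [exact Hde|].
    intros x y u v Ha Hl.
    destruct (Rlt_or_le ((d x u + d y v)/2) e) as [Hlt|Hge].
    - pose proof (Hweak x y u v Ha). lra.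
    - assert (Hc' := Hc x y u v ltac:(lra)).
      pose proof (Hd0 (F x y) (F u v)). nra. }
  destruct HB2 as [x0 [y0 [H0a H0b]]].
  set (xs := fun n => fst (iterT F (x0,y0) n)).
  set (ys := fun n => snd (iterT F (x0,y0) n)).
  assert (Exs : forall n, xs (S n) = F (xs n) (ys n)) by reflexivity.
  assert (Eys : forall n, ys (S n) = F (ys n) (xs n)) by reflexivity.
  assert (Hstep : forall n, 1 <= alpha (xs n, ys n) (xs (S n), ys (S n)) /\
                  1 <= alpha (ys (S n), xs (S n)) (ys n, xs n)).
  { induction n as [|n [A B]].
    - split; [exact H0a | exact H0b].
    - split.
      + rewrite (Exs (S n)), (Eys (S n)), (Exs n), (Eys n).
        rewrite (Exs n), (Eys n) in A. exact (HB1 _ _ _ _ A).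
      + rewrite (Exs (S n)), (Eys (S n)), (Exs n), (Eys n).
        rewrite (Exs n), (Eys n) in B. exact (HB1 _ _ _ _ B). }
  assert (HP : forall k n, 1 <= alpha (xs n, ys n)
                 (xs (n+1+k*N)%nat, ys (n+1+k*N)%nat)).
  { apply (chain_lemma N (fun a b => 1 <= alpha (xs a, ys a) (xs b, ys b))).
    - intro n; apply Hstep.
    - intros i Hi. apply (Htrans (fun t => (xs (i t), ys (i t)))).
      intros t Ht. apply Hi. exact Ht. }
  assert (HQ : forall k n, 1 <= alpha (ys (n+1+k*N)%nat, xs (n+1+k*N)%nat)
                 (ys n, xs n)).
  { apply (chain_lemma N (fun a b => 1 <= alpha (ys b, xs b) (ys a, xs a))).
    - intro n; apply Hstep.
    - intros i Hi.
      assert (H := Htrans (fun t => (ys (i (S N - t)%nat), xs (i (S N - t)%nat)))).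
      cbv beta in H.
      replace (S N - S N)%nat with 0%nat in H by lia.
      replace (S N - 0)%nat with (S N) in H by lia.
      apply H. intros t Ht.
      replace (S N - t)%nat with (S (N-t)) by lia.
      replace (S N - S t)%nat with (N - t)%nat by lia.
      apply Hi. lia. }
  set (r := fun a b => (d (xs a) (xs b) + d (ys a) (ys b))/2).
  assert (Hr0 : forall a b, 0 <= r a b).
  { intros a b; unfold r; pose proof (Hd0 (xs a) (xs b)); pose proof (Hd0 (ys a) (ys b)); lra. }
  assert (Hrtri : forall a b c, r a c <= r a b + r b c).
  { intros a b c; unfold r.
    pose proof (Hdtri (xs a) (xs b) (xs c)); pose proof (Hdtri (ys a) (ys b) (ys c)); lra. }
  assert (Hrsym : forall a b, r a b = r b a).
  { intros a b; unfold r; rewrite (Hdsym (xs a)), (Hdsym (ys a)); reflexivity. }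
  assert (Hraa : forall a, r a a = 0).
  { intros a; unfold r; rewrite !Hdxx; lra. }
  assert (Hrw : forall a b, 1 <= alpha (xs a, ys a) (xs b, ys b) ->
              1 <= alpha (ys b, xs b) (ys a, xs a) -> r (S a) (S b) <= r a b).
  { intros a b Ha Hb. unfold r. rewrite !Exs, !Eys.
    pose proof (Hweak _ _ _ _ Ha) as h1. pose proof (Hweak _ _ _ _ Hb) as h2.
    rewrite (Hdsym (F (ys b) (xs b))), (Hdsym (ys b)), (Hdsym (xs b)) in h2. lra. }
  assert (Hrmk : forall e, 0 < e -> exists de, 0 < de /\ forall a b,
              1 <= alpha (xs a, ys a) (xs b, ys b) ->
              1 <= alpha (ys b, xs b) (ys a, xs a) ->
              r a b < e + de -> r (S a) (S b) < e).
  { intros e He. destruct (Hmk e He) as [de [Hde Hm]]. exists de; split; [exact Hde|].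
    intros a b Ha Hb Hl. unfold r in *. rewrite !Exs, !Eys.
    assert (h1 := Hm _ _ _ _ Ha ltac:(lra)).
    assert (h2 := Hm _ _ _ _ Hb ltac:(rewrite (Hdsym (ys b)), (Hdsym (xs b)); lra)).
    rewrite (Hdsym (F (ys b) (xs b))) in h2. lra. }
  set (c := fun n => r n (S n)).
  assert (Hcdec : Un_decreasing c).
  { intro n. unfold c. apply Hrw; apply Hstep. }
  assert (Hclb : has_lb c).
  { exists 0. intros x [i Hi]. rewrite Hi. unfold opp_seq. pose proof (Hr0 i (S i)).
    unfold c. lra. }
  destruct (decreasing_cv c Hcdec Hclb) as [l Hl].
  assert (Hlle : forall n, l <= c n) by (apply decreasing_ineq; assumption).
  assert (Hl0 : l = 0).
  { destruct (Rtotal_order l 0) as [Hneg|[Heq|Hpos]].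
    - destruct (Hl (- l) ltac:(lra)) as [K HK].
      specialize (HK K (le_n K)). unfold R_dist in HK.
      pose proof (Hr0 K (S K)). unfold c in HK.
      apply Rabs_def2 in HK. lra.
    - exact Heq.
    - destruct (Hrmk l Hpos) as [de [Hde Hm]].
      destruct (Hl de Hde) as [K HK].
      specialize (HK K (le_n K)). unfold R_dist in HK. apply Rabs_def2 in HK.
      assert (c (S K) < l).
      { unfold c. apply Hm; try apply Hstep. unfold c in HK. lra. }
      specialize (Hlle (S K)). lra. }
  subst l.
  assert (Hc0 : forall e, 0 < e -> exists K, forall n, (K <= n)%nat -> r n (S n) < e).
  { intros e He. destruct (Hl e He) as [K HK]. exists K. intros n Hn.
    specialize (HK n Hn). unfold R_dist in HK. apply Rabs_def2 in HK. unfold c in HK. lra. }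
  assert (Hsum : forall K eta, (forall n, (K <= n)%nat -> r n (S n) < eta) ->
            forall j n, (K <= n)%nat -> r n (n + j)%nat <= INR j * eta).
  { intros K eta HK j. induction j as [|j IH]; intros n Hn.
    - rewrite Nat.add_0_r, Hraa. simpl. lra.
    - replace (n + S j)%nat with (S (n + j)) by lia.
      pose proof (Hrtri n (n+j)%nat (S (n+j))).
      pose proof (IH n Hn). pose proof (HK (n+j)%nat ltac:(lia)).
      rewrite S_INR. lra. }
  assert (HNpos : 1 <= INR N).
  { replace 1 with (INR 1) by reflexivity. apply le_INR. lia. }
  assert (Hcore : forall e, 0 < e -> exists K, forall n m, (K <= n)%nat -> (n < m)%nat ->
            r n m < 2 * e).
  { intros e He. destruct (Hrmk e He) as [de [Hde Hm]].
    set (de' := Rmin de e).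
    assert (Hde' : 0 < de') by (apply Rmin_pos; lra).
    assert (Hde'1 : de' <= de) by apply Rmin_l.
    assert (Hde'2 : de' <= e) by apply Rmin_r.
    set (eta := de' / (2 * INR N)).
    assert (Heta : 0 < eta) by (unfold eta; apply Rdiv_lt_0_compat; lra).
    assert (HNeta : INR N * eta = de' / 2) by (unfold eta; field; lra).
    destruct (Hc0 eta Heta) as [K HK]. exists K.
    assert (Hs := Hsum K eta HK).
    assert (Claim : forall k n, (K <= n)%nat -> r n (n + 1 + k * N)%nat < e + de' / 2).
    { induction k as [|k IH]; intros n Hn.
      - replace (n + 1 + 0 * N)%nat with (S n) by lia.
        pose proof (HK n Hn).
        assert (eta <= INR N * eta) by (rewrite <- (Rmult_1_l eta) at 1; apply Rmult_le_compat_r; lra).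
        lra.
      - set (a := (n + (N - 1))%nat).
        assert (Ha : (K <= a)%nat) by (unfold a; lia).
        pose proof (IH a Ha) as Hab.
        assert (Hs1 : r (S a) (S (a + 1 + k * N)%nat) < e).
        { apply Hm; [apply HP | apply HQ | lra]. }
        replace (n + 1 + S k * N)%nat with (S (a + 1 + k * N)) by (unfold a; lia).
        pose proof (Hrtri n (S a) (S (a + 1 + k * N))).
        replace (S a) with (n + N)%nat in H, Hs1 by (unfold a; lia).
        pose proof (Hs N n Hn). lra. }
    intros n m Hn Hnm.
    set (k := ((m - n - 1) / N)%nat). set (j := ((m - n - 1) mod N)%nat).
    assert (Hdm := Nat.div_mod (m - n - 1) N HN).
    assert (Hj := Nat.mod_upper_bound (m - n - 1) N HN).
    fold k j in Hdm, Hj.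
    assert (Em : m = ((n + 1 + k * N) + j)%nat) by lia.
    pose proof (Hrtri n (n + 1 + k * N)%nat m).
    pose proof (Claim k n Hn).
    rewrite Em in H |- *.
    pose proof (Hs j (n + 1 + k * N)%nat ltac:(lia)).
    assert (INR j <= INR N) by (apply le_INR; lia).
    assert (INR j * eta <= INR N * eta) by (apply Rmult_le_compat_r; lra).
    lra. }
  assert (Hcx : cauchy_seq d xs).
  { intros eps Heps. destruct (Hcore (eps/4) ltac:(lra)) as [K HK]. exists K.
    intros m n Hm Hn. destruct (lt_eq_lt_dec n m) as [[Hlt|Heq]|Hgt].
    - pose proof (HK n m Hn Hlt). unfold r in H.
      pose proof (Hd0 (ys n) (ys m)). rewrite Hdsym. lra.
    - subst. rewrite Hdxx. lra.
    - pose proof (HK m n Hm Hgt). unfold r in H.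
      pose proof (Hd0 (ys m) (ys n)). lra. }
  assert (Hcy : cauchy_seq d ys).
  { intros eps Heps. destruct (Hcore (eps/4) ltac:(lra)) as [K HK]. exists K.
    intros m n Hm Hn. destruct (lt_eq_lt_dec n m) as [[Hlt|Heq]|Hgt].
    - pose proof (HK n m Hn Hlt). unfold r in H.
      pose proof (Hd0 (xs n) (xs m)). rewrite Hdsym. lra.
    - subst. rewrite Hdxx. lra.
    - pose proof (HK m n Hm Hgt). unfold r in H.
      pose proof (Hd0 (xs m) (xs n)). lra. }
  destruct (Hcomp xs Hcx) as [xl Hxl].
  destruct (Hcomp ys Hcy) as [yl Hyl].
  destruct (HB4 xs ys xl yl Hxl Hyl Hstep) as [phi [Hinc Hphi]].
  assert (Hphik : forall k, (k <= phi k)%nat).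
  { induction k as [|k IH]; [lia|]. pose proof (Hinc k). lia. }
  assert (Happrox : forall eps, 0 < eps -> exists n,
            d (xs n) xl < eps /\ d (xs (S n)) xl < eps /\
            d (ys n) yl < eps /\ d (ys (S n)) yl < eps /\
            1 <= alpha (xs n, ys n) (xl, yl) /\ 1 <= alpha (yl, xl) (ys n, xs n)).
  { intros eps Heps. destruct (Hxl eps Heps) as [M1 HM1].
    destruct (Hyl eps Heps) as [M2 HM2].
    exists (phi (M1 + M2)%nat). pose proof (Hphik (M1 + M2)%nat).
    destruct (Hphi (M1 + M2)%nat) as [A B].
    repeat split; try assumption;
      first [apply HM1 | apply HM2]; lia. }
  exists xl, yl. split.
  - apply Hdeq.
    destruct (Req_dec (d xl (F xl yl)) 0) as [E|E]; [exact E|].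
    exfalso. pose proof (Hd0 xl (F xl yl)).
    set (eps := d xl (F xl yl)).
    destruct (Happrox (eps/2) ltac:(unfold eps; lra)) as [n [h1 [h2 [h3 [h4 [h5 h6]]]]]].
    pose proof (Hweak _ _ _ _ h5). rewrite <- Exs in H0.
    pose proof (Hdtri xl (xs (S n)) (F xl yl)).
    rewrite (Hdsym xl (xs (S n))) in H1. fold eps in H1. lra.
  - apply Hdeq.
    destruct (Req_dec (d yl (F yl xl)) 0) as [E|E]; [exact E|].
    exfalso. pose proof (Hd0 yl (F yl xl)).
    set (eps := d yl (F yl xl)).
    destruct (Happrox (eps/2) ltac:(unfold eps; lra)) as [n [h1 [h2 [h3 [h4 [h5 h6]]]]]].
    pose proof (Hweak _ _ _ _ h6). rewrite <- Eys in H0.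
    pose proof (Hdtri yl (ys (S n)) (F yl xl)).
    rewrite (Hdsym (F yl xl)) in H0. rewrite (Hdsym yl (ys (S n))) in H1.
    rewrite (Hdsym yl (ys n)), (Hdsym xl (xs n)) in H0. fold eps in H1. lra.
Qed.
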